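(* Let $m\le k\le n$ be positive integers, $\epsilon\in(0,1)$ with $k\ge\frac{4m}{\epsilon}+\frac{12}{\epsilon^2}\log(\frac1\epsilon)$, $\mathbf a_1,\dots,\mathbf a_n\in\mathbb R^m$, and $w^*=\max\{[\det(\sum_{i\in S}\mathbf a_i\mathbf a_i^\top)]^{1/m}: S\subseteq[n],|S|=k\}$. Let $(\hat{\mathbf x},\hat w)$ be an optimal solution of the convex relaxation $\max\{w: w\le[\det(\sum_{i\in[n]}x_i\mathbf a_i\mathbf a_i^\top)]^{1/m},\ \sum_ix_i=k,\ \mathbf x\in[0,1]^n\}$. Consider the randomized algorithm: repeatedly sample a set $\mathcal S\subseteq[n]$ by including each $i\in[n]$ independently with probability $\frac{\hat x_i}{1+\epsilon}$, until $|\mathcal S|\le k$; then, while $|\mathcal S|<k$, add to $\mathcal S$ an element $j^*\in\arg\max_{j\in[n]\setminus\mathcal S}[\det(\sum_{i\in\mathcal S}\mathbf a_i\mathbf a_i^\top+\mathbf a_j\mathbf a_j^\top)]^{1/m}$; output $\mathcal S$. Then the output (a set of size $k$) satisfies $$\Big\{\mathbb E\Big[\det\Big(\sum_{i\in\mathcal S}\mathbf a_i\mathbf a_i^\top\Big)\Big]\Big\}^{1/m}\ge(1-\epsilon)\,w^*,$$ i.e. the algorithm is a $(1-\epsilon)$-approximation for the $D$-optimal design problem.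
   Context: $[n]=\{1,\dots,n\}$; $\log$ is the natural logarithm. This is the $D$-optimal design problem without repetitions. *)

(* Defs.v *)
From HB Require Import structures.
From mathcomp Require Import all_boot all_order all_algebra.
From mathcomp Require Import reals exp.
Set Implicit Arguments. Unset Strict Implicit. Unset Printing Implicit Defensive.
Import Order.TTheory GRing.Theory Num.Theory.
Local Open Scope ring_scope.

Section DOpt.
Variables (R : realType) (m n : nat) (a : 'I_n -> 'cV[R]_m).

Definition infoS (S : {set 'I_n}) : 'M[R]_m :=
  \sum_(i in S) (a i *m (a i)^T).

Definition infoX (x : 'I_n -> R) : 'M[R]_m :=
  \sum_(i < n) (x i *: (a i *m (a i)^T)).

Definition detroot (M : 'M[R]_m) : R := powR (\det M) (m%:R^-1).

(* w^* = max over |S| = k of [det(sum_{i in S} a_i a_i^T)]^{1/m}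
   (values are >= 0, so 0 is a harmless neutral element; the set of S is
   nonempty whenever k <= n). *)
Definition wstar (k : nat) : R :=
  \big[Order.max/0]_(S : {set 'I_n} | #|S| == k) detroot (infoS S).

Definition relax_feasible (k : nat) (x : 'I_n -> R) : Prop :=
  (\sum_(i < n) x i = k%:R) /\ (forall i, 0 <= x i <= 1).

Definition relax_optimal (k : nat) (xh : 'I_n -> R) (wh : R) : Prop :=
  [/\ relax_feasible k xh, wh <= detroot (infoX xh) &
      forall x w, relax_feasible k x -> w <= detroot (infoX x) -> w <= wh].

(* greedy_path k T U : starting from the current set T, the greedy loop
   "while |S| < k add j* in argmax_{j notin S} detroot(infoS (S + j))"
   can terminate with output U (for some resolution of ties). *)
Inductive greedy_path (k : nat) : {set 'I_n} -> {set 'I_n} -> Prop :=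
| gp_done (S : {set 'I_n}) : ~~ (#|S| < k)%N -> greedy_path k S S
| gp_step (S : {set 'I_n}) (j : 'I_n) (U : {set 'I_n}) : (#|S| < k)%N -> j \notin S ->
    (forall j', j' \notin S ->
        detroot (infoS (j' |: S)) <= detroot (infoS (j |: S))) ->
    greedy_path k (j |: S) U -> greedy_path k S U.

Definition prod_prob (p : 'I_n -> R) (T : {set 'I_n}) : R :=
  \prod_(i in T) p i * \prod_(i in ~: T) (1 - p i).

(* Expected value of det(sum_{i in output} a_i a_i^T) for the algorithm:
   rejection sampling until |S| <= k yields the product distribution
   conditioned on |S| <= k; then the greedy completion g is applied. *)
Definition expected_det (k : nat) (p : 'I_n -> R)
    (g : {set 'I_n} -> {set 'I_n}) : R :=
  (\sum_(T : {set 'I_n} | (#|T| <= k)%N) prod_prob p T * \det (infoS (g T)))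
  / (\sum_(T : {set 'I_n} | (#|T| <= k)%N) prod_prob p T).

End DOpt.

(* Main.v *)
Require Import Defs.
From HB Require Import structures.
From mathcomp Require Import all_boot all_order all_algebra.
From mathcomp Require Import reals exp.
From mathcomp Require Import sequences ring lra perm.
Import Order.TTheory GRing.Theory Num.Theory.
Local Open Scope ring_scope.

Set Implicit Arguments. Unset Strict Implicit. Unset Printing Implicit Defensive.

Section Num.
Variable R : realType.

Lemma numeric (e L l K M : R) : 0 < e < 1 -> 1 <= M -> M <= K -> 0 <= L -> L <= e^-1 - 1 ->
  e / (4 + e) + e / (4 + 2 * e) <= l -> 4 * M / e + 12 / e ^+ 2 * L <= K ->
  (e / 2) * K / (1 + e) + 2 * L <= (K - M + 1) * l.
Proof.
move=> /andP[e0 e1] M1 MK L0 Lu hl hK.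
have h1 : 1 + e != 0 by apply: lt0r_neq0; lra.
have h2 : 2 + 2 * e != 0 by apply: lt0r_neq0; lra.
have h3 : 4 + 2 * e != 0 by apply: lt0r_neq0; lra.
have h4 : 4 + e != 0 by apply: lt0r_neq0; lra.
have h5 : e != 0 by apply: lt0r_neq0; lra.
set D := (4 + e) * (4 + 2 * e) * (2 + 2 * e).
have D0 : 0 < D.
  rewrite /D; apply: mulr_gt0; [apply: mulr_gt0|]; lra.
set psi := e / (4 + e) + e / (4 + 2 * e).
set c := psi - (e / 2) / (1 + e).
have ce : c = e ^+ 2 * (10 + 4 * e) / D.
  by rewrite /c /psi /D; field; rewrite h1 h2 h3 h4.
have pe : psi = e * (8 + 3 * e) * (2 + 2 * e) / D.
  by rewrite /psi /D; field; rewrite h2 h3 h4.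
have c0 : 0 <= c.
  rewrite ce; apply: divr_ge0; last exact: ltW.
  apply: mulr_ge0; [exact: sqr_ge0|lra].
have A : e * psi <= 4 * c.
  rewrite ce pe !mulrA ler_pM2r; last by rewrite invr_gt0.
  have H : (8 + 3 * e) * (2 + 2 * e) <= 4 * (10 + 4 * e) by nra.
  have ee : 0 <= e * e by nra.
  nra.
have key : 0 <= 4 * c / e + (12 * c / e ^+ 2 - 2) * (e^-1 - 1).
  have -> : 4 * c / e + (12 * c / e ^+ 2 - 2) * (e^-1 - 1) =
     (56 - 120 * e + 48 * e ^+ 2 + 64 * e ^+ 3 + 8 * e ^+ 4) / (e * D).
    by rewrite ce /D; field; rewrite h2 h3 h4 h5.
  apply: divr_ge0; last by apply: mulr_ge0; lra.
  have q1 : 0 <= e * (e - 1/2) ^+ 2 by apply: mulr_ge0; [lra|exact: sqr_ge0].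
  have q2 : 0 <= (e - 17/28) ^+ 2 by exact: sqr_ge0.
  have q3 : 0 <= e ^+ 4 by rewrite exprn_ge0 //; lra.
  nra.
have B : 0 <= 4 * c / e + (12 * c / e ^+ 2 - 2) * L.
  case: (lerP 2 (12 * c / e ^+ 2)) => h.
    apply: addr_ge0; last by apply: mulr_ge0; lra.
    by apply: divr_ge0; [lra|exact: ltW].
  apply: le_trans key _; rewrite lerD2l; apply: ler_wnM2l; lra.
have s1 : (4 * M / e + 12 / e ^+ 2 * L) * c <= K * c := ler_wpM2r c0 hK.
have s2 : psi <= 4 * c / e by rewrite ler_pdivlMr // mulrC.
have s3 : (M - 1) * psi <= (M - 1) * (4 * c / e) by apply: ler_wpM2l; lra.
have id1 : (4 * M / e + 12 / e ^+ 2 * L) * c =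
   (M - 1) * (4 * c / e) + (4 * c / e + (12 * c / e ^+ 2 - 2) * L) + 2 * L.
  by field; rewrite h5.
have id2 : e / 2 * K / (1 + e) = K * psi - K * c by rewrite /c; field; rewrite h1.
have s4 : (K - M + 1) * psi <= (K - M + 1) * l.
  by apply: ler_wpM2l; [lra|exact: hl].
rewrite id2; lra.
Qed.
End Num.

Ltac nz := repeat (apply/andP; split); apply: lt0r_neq0; lra.

Section Num2.
Variable R : realType.

Lemma ln_lb (y : R) : 0 < y -> 1 - y^-1 <= ln y.
Proof.
move=> y0.
have yi : 0 < y^-1 by rewrite invr_gt0.
have := @le_ln1Dx R (y^-1 - 1) ltac:(lra).
rewrite addrC subrK lnV; last by rewrite posrE.
lra.
Qed.

Lemma ln_half (e : R) : 0 < e -> e / (4 + e) + e / (4 + 2 * e) <= ln (1 + e / 2).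
Proof.
move=> e0.
have b10 : 0 < 1 + e / 4 by lra.
have b20 : 0 < 1 + e / 2 by lra.
have r0 : 0 < (1 + e / 2) / (1 + e / 4) by apply: divr_gt0.
have -> : 1 + e / 2 = (1 + e / 4) * ((1 + e / 2) / (1 + e / 4)).
  by field; nz.
rewrite lnM ?posrE //.
have h1 := ln_lb b10.
have h2 := ln_lb r0.
have -> : e / (4 + e) = 1 - (1 + e / 4)^-1.
  by field; nz.
have -> : e / (4 + 2 * e) = 1 - ((1 + e / 2) / (1 + e / 4))^-1.
  by field; nz.
lra.
Qed.

Lemma theta (e : R) (m k : nat) (S : R) : 0 < e < 1 -> (0 < m)%N -> (m <= k)%N ->
  4 * m%:R / e + 12 / e ^+ 2 * ln (e^-1) <= k%:R -> S <= k%:R / (1 + e) ->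
  (1 + e / 2) ^+ m / (1 + e / 2) ^+ k.+1 * expR (e / 2 * S) <= e ^+ 2.
Proof.
move=> he m0 mk hk hS; case/andP: (he) => e0 e1.
have z0 : 0 < 1 + e / 2 by lra.
have ei : 0 < e^-1 by rewrite invr_gt0.
set l := ln (1 + e / 2).
set L := ln (e^-1).
have zX : forall j : nat, (1 + e / 2) ^+ j = expR (j%:R * l).
  by move=> j; rewrite expRM_natl lnK // posrE.
have eX : e ^+ 2 = expR (2%:R * (- L)).
  by rewrite expRM_natl /L lnV ?posrE // opprK lnK // posrE.
rewrite !zX eX -expRN -!expRD ler_expR.
have L0 : 0 <= L by apply: ln_ge0; rewrite -[1]invr1 lef_pV2 ?posrE //; lra.
have Lu : L <= e^-1 - 1.
  have := @le_ln1Dx R (e^-1 - 1) ltac:(lra); rewrite addrC subrK //.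
have M1 : 1 <= m%:R :> R by rewrite ler1n.
have MK : m%:R <= k%:R :> R by rewrite ler_nat.
have N := numeric he M1 MK L0 Lu (ln_half e0) hk.
have hS2 : e / 2 * S <= e / 2 * (k%:R / (1 + e)) by apply: ler_wpM2l => //; lra.
rewrite -natr1.
move: N hS2; rewrite -/l mulrA; lra.
Qed.
End Num2.

Lemma sum_set_prod (R : comNzRingType) (I : finType) (x y : I -> R) :
  \sum_(T : {set I}) (\prod_(i in T) x i * \prod_(i in ~: T) y i) = \prod_i (x i + y i).
Proof.
transitivity (\prod_i \sum_(b : bool) (if b then x i else y i)); last first.
  by apply: eq_bigr => i _; rewrite big_bool.
rewrite bigA_distr_bigA /=.
rewrite (reindex (fun f : {ffun I -> bool} => [set i | f i])) /=; last first.
  exists (fun T : {set I} => [ffun i => i \in T]) => [f _|T _].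
    by apply/ffunP => i; rewrite ffunE inE.
  by apply/setP => i; rewrite inE ffunE.
apply: eq_bigr => f _.
rewrite [RHS](bigID (fun i => f i)) /=; congr (_ * _).
  apply: eq_big => [i|i]; first by rewrite inE.
  by rewrite inE => ->.
apply: eq_big => [i|i]; first by rewrite !inE.
by rewrite !inE => /negbTE ->.
Qed.

Section Alg.
Variables (R : realType) (m n : nat) (a : 'I_n -> 'cV[R]_m).

Definition Bf (f : {ffun 'I_m -> 'I_n}) : 'M[R]_m := \matrix_(r, j) a (f r) j 0.
Definition beta (f : {ffun 'I_m -> 'I_n}) : R :=
  (\prod_r a (f r) r 0) * \det (Bf f).

Lemma det_infoX (x : 'I_n -> R) :
  \det (infoX a x) = \sum_(f : {ffun 'I_m -> 'I_n}) (\prod_r x (f r)) * beta f.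
Proof.
rewrite /determinant.
transitivity (\sum_(s : 'S_m) (-1) ^+ s * \sum_(f : {ffun 'I_m -> 'I_n})
   \prod_r (x (f r) * a (f r) r 0 * a (f r) (s r) 0)).
  apply: eq_bigr => s _; congr (_ * _).
  transitivity (\prod_r \sum_i (x i * a i r 0 * a i (s r) 0)).
    apply: eq_bigr => r _; rewrite /infoX summxE; apply: eq_bigr => i _.
    by rewrite mxE mxE big_ord1 mxE mulrA.
  by rewrite bigA_distr_bigA.
under eq_bigr do rewrite big_distrr.
rewrite exchange_big /=; apply: eq_bigr => f _.
rewrite /beta /Bf /determinant mulrA big_distrr /=; apply: eq_bigr => s _.
rewrite big_split big_split /=.
have -> : \prod_(i < m) a (f i) (s i) 0 = \prod_i (\matrix_(r, j) a (f r) j 0) i (s i).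
  by apply: eq_bigr => r _; rewrite mxE.
by rewrite mulrCA mulrA.
Qed.

Lemma beta_noninj (f : {ffun 'I_m -> 'I_n}) : ~~ injectiveb f -> beta f = 0.
Proof.
move=> /injectivePn [r1 [r2 ne eq]].
rewrite /beta (determinant_alternate ne) ?mulr0 // => j.
by rewrite /Bf !mxE eq.
Qed.

Definition imf (f : {ffun 'I_m -> 'I_n}) : {set 'I_n} := [set f i | i in [set: 'I_m]].
Definition gam (U : {set 'I_n}) : R :=
  \sum_(f : {ffun 'I_m -> 'I_n} | imf f == U) beta f.

Lemma det_infoX2 (x : 'I_n -> R) :
  \det (infoX a x) = \sum_(U : {set 'I_n}) (\prod_(i in U) x i) * gam U.
Proof.
rewrite det_infoX.
transitivity (\sum_(f : {ffun 'I_m -> 'I_n}) (\prod_(i in imf f) x i) * beta f).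
  apply: eq_bigr => f _.
  case: (boolP (injectiveb f)) => [/injectiveP inj|ninj]; last first.
    by rewrite beta_noninj ?mulr0.
  congr (_ * _); rewrite /imf big_imset /=; last by move=> i j _ _; exact: inj.
  by apply: eq_bigl => i; rewrite in_setT.
rewrite (partition_big imf predT) //=.
apply: eq_bigr => U _; rewrite big_distrr /=.
by apply: eq_bigr => f /eqP <-.
Qed.

Lemma gam_card (U : {set 'I_n}) : #|U| != m -> gam U = 0.
Proof.
move=> cU; rewrite /gam big1 // => f /eqP fU; apply: beta_noninj.
apply/negP => /injectiveP inj; move: cU; rewrite -fU /imf card_imset //.
by rewrite cardsT card_ord eqxx.
Qed.

Lemma infoS_infoX (T : {set 'I_n}) : infoS a T = infoX a (fun i => (i \in T)%:R).
Proof.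
rewrite /infoS /infoX big_mkcond; apply: eq_bigr => i _.
by case: (i \in T); rewrite ?scale1r ?scale0r.
Qed.

Lemma det_infoS (T : {set 'I_n}) :
  \det (infoS a T) = \sum_(U : {set 'I_n}) (U \subset T)%:R * gam U.
Proof.
rewrite infoS_infoX det_infoX2; apply: eq_bigr => U _; congr (_ * _).
case: (boolP (U \subset T)) => [sub | /subsetPn [i iU iT]].
  by rewrite big1 // => i iU; rewrite (subsetP sub).
by rewrite (bigD1 i) //= (negbTE iT) mul0r.
Qed.

Lemma det_sum_ge0 p (h : 'I_p -> 'I_n) : p = m ->
  0 <= \det (\sum_(j < p) (a (h j) *m (a (h j))^T)).
Proof.
move=> E; subst p.
set B : 'M[R]_m := \matrix_(r, j) a (h j) r 0.
have -> : \sum_(j < m) (a (h j) *m (a (h j))^T) = B *m B^T.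
  apply/matrixP => r s; rewrite summxE !mxE; apply: eq_bigr => j _.
  by rewrite !mxE big_ord1 !mxE.
by rewrite det_mulmx det_tr -expr2 sqr_ge0.
Qed.

Lemma detS_ge0 (U : {set 'I_n}) : #|U| = m -> 0 <= \det (infoS a U).
Proof.
move=> cU; rewrite /infoS big_enum_val; exact: det_sum_ge0.
Qed.

Lemma gam_ge0 (U : {set 'I_n}) : 0 <= gam U.
Proof.
case: (boolP (#|U| == m)) => [/eqP cU|]; last by move/gam_card ->.
have -> : gam U = \det (infoS a U).
  rewrite det_infoS (bigD1 U) //= subxx mul1r big1 ?addr0 // => V VU.
  case: (boolP (V \subset U)) => [sub|]; last by rewrite mul0r.
  rewrite gam_card ?mulr0 // -cU neq_ltn proper_card //.
  by rewrite properEneq VU sub.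
exact: detS_ge0.
Qed.

Lemma det_infoS_mono (S T : {set 'I_n}) : S \subset T -> \det (infoS a S) <= \det (infoS a T).
Proof.
move=> ST; rewrite !det_infoS; apply: ler_sum => U _.
apply: ler_wpM2r; first exact: gam_ge0.
case: (boolP (U \subset S)) => US; last by rewrite ler0n.
by rewrite (subset_trans US ST).
Qed.

Lemma det_infoX_ge0 (x : 'I_n -> R) : (forall i, 0 <= x i) -> 0 <= \det (infoX a x).
Proof.
move=> x0; rewrite det_infoX2; apply: sumr_ge0 => U _.
by apply: mulr_ge0; [apply: prodr_ge0 => i _; exact: x0|exact: gam_ge0].
Qed.
End Alg.

Section Prob.
Variables (R : realType) (n : nat) (p : 'I_n -> R).
Hypothesis p01 : forall i, 0 <= p i <= 1.

Lemma q_ge0 T : 0 <= prod_prob p T.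
Proof.
rewrite /prod_prob; apply: mulr_ge0; apply: prodr_ge0 => i _;
  have := p01 i; case/andP => ? ?; lra.
Qed.

Lemma sum_q : \sum_(T : {set 'I_n}) prod_prob p T = 1.
Proof.
rewrite /prod_prob sum_set_prod; apply: big1 => i _; lra.
Qed.

Definition yU (U : {set 'I_n}) i := if i \in U then 0 else 1 - p i.

Lemma qU (U T : {set 'I_n}) : prod_prob p T * (U \subset T)%:R =
  \prod_(i in T) p i * \prod_(i in ~: T) yU U i.
Proof.
rewrite /prod_prob /yU.
case: (boolP (U \subset T)) => [sub | /subsetPn [i iU iT]].
  rewrite mulr1; congr (_ * _); apply: eq_bigr => i; rewrite inE => iT.
  by have -> : (i \in U) = false by apply/negP => /(subsetP sub); rewrite (negbTE iT).
rewrite mulr0 [X in _ * X](bigD1 i) ?inE //= iU mul0r mulr0 //.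
Qed.

Lemma sum_qU (U : {set 'I_n}) :
  \sum_(T : {set 'I_n}) prod_prob p T * (U \subset T)%:R = \prod_(i in U) p i.
Proof.
rewrite (eq_bigr _ (fun T _ => qU U T)).
rewrite sum_set_prod (bigID (fun i => i \in U)) /= /yU.
rewrite [X in _ * X]big1 ?mulr1; last by move=> i /negbTE ->; lra.
by apply: eq_bigr => i ->; rewrite addr0.
Qed.

Lemma sum_qUz (U : {set 'I_n}) z :
  \sum_(T : {set 'I_n}) prod_prob p T * (U \subset T)%:R * z ^+ #|T| =
  z ^+ #|U| * \prod_(i in U) p i * \prod_(i in ~: U) (1 - p i + p i * z).
Proof.
transitivity (\sum_(T : {set 'I_n}) (\prod_(i in T) (p i * z) * \prod_(i in ~: T) yU U i)).
  apply: eq_bigr => T _; rewrite (qU U T) big_split /= prodr_const; ring.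
rewrite sum_set_prod (bigID (fun i => i \in U)) /= /yU.
congr (_ * _).
  rewrite (eq_bigr (fun i => p i * z)); last by move=> i ->; rewrite addr0.
  by rewrite big_split /= prodr_const mulrC.
apply: eq_big => [i|i]; first by rewrite inE.
by move/negbTE ->; ring.
Qed.

Lemma sum_tail (U : {set 'I_n}) (K : nat) z : 1 <= z ->
  \prod_(i in U) p i * (1 - z ^+ #|U| / z ^+ K.+1 * \prod_(i in ~: U) (1 - p i + p i * z))
  <= \sum_(T : {set 'I_n} | (#|T| <= K)%N) prod_prob p T * (U \subset T)%:R.
Proof.
move=> z1.
have z0 : 0 < z by lra.
have zK0 : 0 < z ^+ K.+1 by apply: exprn_gt0.
have E := sum_qU U.
rewrite (bigID (fun T : {set 'I_n} => (#|T| <= K)%N)) /= in E.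
set S1 := \sum_(T | _) _ in E.
set S2 := \sum_(T | _) _ in E.
have S2le : S2 <= z ^+ #|U| * \prod_(i in U) p i * \prod_(i in ~: U) (1 - p i + p i * z) / z ^+ K.+1.
  rewrite -sum_qUz mulr_suml.
  apply: le_trans (_ : \sum_(T : {set 'I_n} | ~~ (#|T| <= K)%N)
       prod_prob p T * (U \subset T)%:R * z ^+ #|T| / z ^+ K.+1 <= _).
    apply: ler_sum => T; rewrite -ltnNge => KT.
    rewrite -mulrA ler_peMr //; first by apply: mulr_ge0; [exact: q_ge0|exact: ler0n].
    rewrite ler_pdivlMr // mul1r; apply: ler_weXn2l => //.
  rewrite [X in _ <= X](bigID (fun T : {set 'I_n} => (#|T| <= K)%N)) /= lerDr.
  apply: sumr_ge0 => T _; apply: mulr_ge0; last by rewrite invr_ge0 ltW.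
  apply: mulr_ge0; last by rewrite exprn_ge0 // ltW.
  by apply: mulr_ge0; [exact: q_ge0|exact: ler0n].
have -> : \sum_(T : {set 'I_n} | (#|T| <= K)%N) prod_prob p T * (U \subset T)%:R
   = \prod_(i in U) p i - S2 by rewrite -E addrK.
rewrite mulrBr mulr1 lerB //.
apply: (le_trans S2le); rewrite le_eqVlt; apply/orP; left; apply/eqP; ring.
Qed.

End Prob.

Lemma gp_sub (R : realType) (m n : nat) (a : 'I_n -> 'cV[R]_m) k S U :
  greedy_path a k S U -> S \subset U.
Proof.
elim=> [S0 _|S0 j U0 _ _ _ _ IH]; first exact: subxx.
exact: subset_trans (subsetUr _ _) IH.
Qed.


Unset Implicit Arguments. Set Strict Implicit. Set Printing Implicit Defensive.

Theorem theorem3 (R : realType) (m k n : nat) (eps : R)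
  (a : 'I_n -> 'cV[R]_m) (xh : 'I_n -> R) (wh : R)
  (g : {set 'I_n} -> {set 'I_n}) :
  (0 < m)%N -> (m <= k)%N -> (k <= n)%N ->
  0 < eps < 1 ->
  4 * m%:R / eps + 12 / eps ^+ 2 * ln (eps^-1) <= k%:R ->
  relax_optimal a k xh wh ->
  (forall T : {set 'I_n}, (#|T| <= k)%N -> greedy_path a k T (g T)) ->
  powR (expected_det a k (fun i => xh i / (1 + eps)) g) (m%:R^-1)
    >= (1 - eps) * wstar a k.
Proof.
move=> m0 mk kn he hk [[sumx x01] whle whopt] hg.
case/andP: (he) => e0 e1.
have ep0 : 0 < 1 + eps by lra.
set p := fun i => xh i / (1 + eps).
have p01 : forall i, 0 <= p i <= 1.
  move=> i; have := x01 i => /andP[h0 h1]; rewrite /p; apply/andP; split.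
    by apply: divr_ge0 => //; lra.
  by rewrite ler_pdivrMr // mul1r; lra.
have plt1 : forall i, p i < 1.
  move=> i; have := x01 i => /andP[h0 h1]; rewrite /p ltr_pdivrMr // mul1r; lra.
have sump : \sum_i p i = k%:R / (1 + eps) by rewrite /p -mulr_suml sumx.
have stepA : forall U : {set 'I_n}, #|U| = m ->
  \prod_(i in U) p i * (1 - eps ^+ 2) <=
  \sum_(T : {set 'I_n} | (#|T| <= k)%N) prod_prob p T * (U \subset T)%:R.
  move=> U cU.
  have z1 : 1 <= 1 + eps / 2 by lra.
  apply: le_trans (sum_tail p01 U k z1).
  apply: ler_wpM2l; first by apply: prodr_ge0 => i _; have := p01 i => /andP[].
  rewrite lerD2l lerN2 cU.
  set S := \sum_(i in ~: U) p i.
  have hS : S <= k%:R / (1 + eps).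
    rewrite -sump [X in _ <= X](bigID (fun i => i \in ~: U)) /= lerDl.
    by apply: sumr_ge0 => i _; have := p01 i => /andP[].
  apply: le_trans (theta he m0 mk hk hS).
  apply: ler_wpM2l.
    by apply: divr_ge0; apply: exprn_ge0; lra.
  rewrite /S mulr_sumr expR_sum; apply: ler_prod => i _.
  have := p01 i => /andP[h0 h1]; apply/andP; split; first nra.
  by apply: le_trans (expR_ge1Dx _); lra.
set d := \det (infoX a xh).
have d0 : 0 <= d by apply: det_infoX_ge0 => i; have := x01 i => /andP[].
have q0 := q_ge0 p01.
set N := \sum_(T : {set 'I_n} | (#|T| <= k)%N) prod_prob p T * \det (infoS a (g T)).
have stepB : (1 - eps ^+ 2) * \det (infoX a p) <= N.
  apply: le_trans (_ : \sum_(T : {set 'I_n} | (#|T| <= k)%N)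
        prod_prob p T * \det (infoS a T) <= N); last first.
    apply: ler_sum => T hT; apply: ler_wpM2l => //.
    by apply: det_infoS_mono; exact: gp_sub (hg T hT).
  under eq_bigr => T _ do rewrite det_infoS mulr_sumr.
  rewrite exchange_big /= det_infoX2 mulr_sumr; apply: ler_sum => U _.
  case: (boolP (#|U| == m)) => [/eqP cU|ncU]; last first.
    rewrite gam_card // !mulr0 big1 // => T _; by rewrite mulr0 mulr0.
  have -> : \sum_(T : {set 'I_n} | (#|T| <= k)%N) prod_prob p T * ((U \subset T)%:R * gam a U)
     = (\sum_(T : {set 'I_n} | (#|T| <= k)%N) prod_prob p T * (U \subset T)%:R) * gam a U.
    by rewrite mulr_suml; apply: eq_bigr => T _; rewrite mulrA.
  rewrite mulrA [_ * \prod_(i in U) p i]mulrC.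
  by apply: ler_wpM2r; [exact: gam_ge0|exact: stepA].
have dp : \det (infoX a p) = ((1 + eps)^-1) ^+ m * d.
  rewrite -detZ /d /infoX scaler_sumr; congr (\det _); apply: eq_bigr => i _.
  by rewrite scalerA /p mulrC.
have em : 0 <= 1 - eps ^+ 2 <= 1 by apply/andP; split; nra.
have stepC : (1 - eps) ^+ m * d <= N.
  apply: le_trans stepB; rewrite dp mulrA; apply: ler_wpM2r => //.
  have -> : (1 - eps) ^+ m = (1 - eps ^+ 2) ^+ m * ((1 + eps)^-1) ^+ m.
    rewrite -exprMn; congr (_ ^+ _); field; apply: lt0r_neq0; lra.
  apply: ler_wpM2r; first by apply: exprn_ge0; rewrite invr_ge0; lra.
  case/andP: em => em0 em1.
  by rewrite -{2}(expr1 (1 - eps ^+ 2)); apply: ler_wiXn2l.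
set Dn := \sum_(T : {set 'I_n} | (#|T| <= k)%N) prod_prob p T.
have Dn1 : Dn <= 1.
  rewrite -(sum_q p) [X in _ <= X](bigID (fun T : {set 'I_n} => (#|T| <= k)%N)) /=.
  by rewrite lerDl; apply: sumr_ge0 => T _.
have Dn0 : 0 < Dn.
  rewrite /Dn (bigD1 set0) ?cards0 //=.
  apply: (@lt_le_trans _ _ (prod_prob p set0)); last first.
    by rewrite lerDl; apply: sumr_ge0 => T _.
  rewrite /prod_prob big_set0 mul1r; apply: prodr_gt0 => i _.
  by have := plt1 i; lra.
have N0 : 0 <= N by apply: le_trans stepC; apply: mulr_ge0 => //; apply: exprn_ge0; lra.
have stepD : (1 - eps) ^+ m * d <= expected_det a k p g.
  apply: le_trans stepC _; rewrite /expected_det -/N -/Dn.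
  by rewrite ler_pdivlMr // ler_piMr.
have wle : wstar a k <= detroot (infoX a xh).
  rewrite /wstar; apply: bigmax_le; first exact: powR_ge0.
  move=> S /eqP cS; apply: le_trans whle.
  apply: (whopt (fun i => (i \in S)%:R)); last by rewrite infoS_infoX.
  split.
    rewrite (eq_bigr (fun i => if i \in S then 1 else 0)); last first.
      by move=> i _; case: (i \in S).
    by rewrite -big_mkcond /= sumr_const cS.
  by move=> i; case: (i \in S); rewrite ?ler01 ?lexx.
have mr0 : 0 <= m%:R^-1 :> R by rewrite invr_ge0 ler0n.
have e10 : 0 <= 1 - eps by lra.
have lhs0 : 0 <= (1 - eps) ^+ m * d by apply: mulr_ge0 => //; apply: exprn_ge0.
apply: le_trans (ge0_ler_powR mr0 _ _ stepD); last first.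
- by rewrite nnegrE (le_trans lhs0 stepD).
- by rewrite nnegrE.
rewrite powRM //; last by apply: exprn_ge0.
rewrite -powR_mulrn // -powRrM divff ?powRr1 //; last by rewrite pnatr_eq0 -lt0n.
by apply: ler_wpM2l.
Qed.
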